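(* Let $(h,i)\in\mathbb D$ and let $\phi=\phi_h^{(i)}$. Then $$\chi_h^{(i)}\circ\phi=\big(\chi_{h+1}^{(2i-1)}+\chi_{h+1}^{(2i)}\big)/\sqrt2,$$ $$\chi_{h+1}^{(2i-1)}\circ\phi=\big(\sqrt2\chi_h^{(i)}+\chi_{h+1}^{(2i-1)}-\chi_{h+1}^{(2i)}\big)/2,$$ $$\chi_{h+1}^{(2i)}\circ\phi=\big(\sqrt2\chi_h^{(i)}-\chi_{h+1}^{(2i-1)}+\chi_{h+1}^{(2i)}\big)/2.$$ Moreover, $\chi_k^{(j)}\circ\phi=\chi_k^{(j+2^{k-h-2})}$ if $(k,j)\in\mathbb S_1$ and $\chi_k^{(j)}\circ\phi=\chi_k^{(j-2^{k-h-2})}$ if $(k,j)\in\mathbb S_2$. All remaining Haar functions $\chi_k^{(j)}$, $(k,j)\in\mathbb D\setminus(\{(h,i),(h+1,2i-1),(h+1,2i)\}\cup\mathbb S_1\cup\mathbb S_2)$, satisfy $\chi_k^{(j)}\circ\phi=\chi_k^{(j)}$.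
   Context: Dyadic intervals: $\Delta_k^{(j)}:=[\frac{j-1}{2^k},\frac{j}{2^k})$ for $k\ge0$. Haar functions: for $k\ge1$, integer $j$, $\chi_k^{(j)}(t)=+2^{(k-1)/2}$ on $\Delta_k^{(2j-1)}$, $-2^{(k-1)/2}$ on $\Delta_k^{(2j)}$, $0$ otherwise, $t\in[0,1)$. Dyadic tree $\mathbb D:=\{(k,j):k\ge1;\ j=1,\dots,2^{k-1}\}$. For $(h,i)\in\mathbb D$, $\phi_h^{(i)}:[0,1)\to[0,1)$ is defined by $\phi_h^{(i)}(t)=t+2^{-(h+1)}$ for $t\in\Delta_{h+1}^{(4i-2)}$, $\phi_h^{(i)}(t)=t-2^{-(h+1)}$ for $t\in\Delta_{h+1}^{(4i-1)}$, and $\phi_h^{(i)}(t)=t$ otherwise (it interchanges these two intervals). Subtrees: $\mathbb S_1:=\{(k,j)\in\mathbb D:\Delta_{k-1}^{(j)}\subseteq\Delta_{h+1}^{(4i-2)}\}$ and $\mathbb S_2:=\{(k,j)\in\mathbb D:\Delta_{k-1}^{(j)}\subseteq\Delta_{h+1}^{(4i-1)}\}$. *)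

(* Defs.v *)
From Stdlib Require Import Reals Lra ZArith.
Open Scope R_scope.

Definition dyad (k : nat) (j : Z) (t : R) : Prop :=
  IZR (j - 1) / 2 ^ k <= t /\ t < IZR j / 2 ^ k.

Definition in_dyadb (k : nat) (j : Z) (t : R) : bool :=
  if Rle_dec (IZR (j - 1) / 2 ^ k) t then
    if Rlt_dec t (IZR j / 2 ^ k) then true else false
  else false.

Definition haar (k : nat) (j : Z) (t : R) : R :=
  if in_dyadb k (2 * j - 1) t then sqrt (2 ^ (k - 1))
  else if in_dyadb k (2 * j) t then - sqrt (2 ^ (k - 1))
  else 0.

Definition inD (k : nat) (j : Z) : Prop :=
  (1 <= k)%nat /\ (1 <= j <= 2 ^ (Z.of_nat k - 1))%Z.

Definition phi_map (h : nat) (i : Z) (t : R) : R :=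
  if in_dyadb (S h) (4 * i - 2) t then t + / 2 ^ (S h)
  else if in_dyadb (S h) (4 * i - 1) t then t - / 2 ^ (S h)
  else t.

Definition inS1 (h : nat) (i : Z) (k : nat) (j : Z) : Prop :=
  inD k j /\ forall t, dyad (k - 1) j t -> dyad (S h) (4 * i - 2) t.
Definition inS2 (h : nat) (i : Z) (k : nat) (j : Z) : Prop :=
  inD k j /\ forall t, dyad (k - 1) j t -> dyad (S h) (4 * i - 1) t.

(* Main.v *)
Require Import Defs.
From Stdlib Require Import Reals ZArith Lia Lra.
Open Scope R_scope.

Definition fl (m : Z) (x : R) := IZR m <= x < IZR m + 1.

Lemma fl_ex x : exists m, fl m x.
Proof. destruct (archimed x) as [H1 H2]. exists (up x - 1)%Z. unfold fl.
rewrite minus_IZR. lra. Qed.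

Lemma pow2_pos n : 0 < 2 ^ n.
Proof. apply pow_lt; lra. Qed.

Lemma IZR_pow2 e : IZR (2 ^ Z.of_nat e) = 2 ^ e.
Proof. rewrite <- pow_IZR. reflexivity. Qed.

Lemma fl_le a m x : fl m x -> (IZR a <= x <-> (a <= m)%Z).
Proof. unfold fl; intros [H1 H2]; split; intro H.
- destruct (Z_le_gt_dec a m) as [|Hc]; auto. exfalso.
  assert (IZR a >= IZR m + 1). { rewrite <- plus_IZR. apply Rle_ge, IZR_le. lia. } lra.
- apply IZR_le in H. lra. Qed.

Lemma fl_lt b m x : fl m x -> (x < IZR b <-> (m < b)%Z).
Proof. unfold fl; intros [H1 H2]; split; intro H.
- destruct (Z_lt_le_dec m b) as [|Hc]; auto. exfalso. apply IZR_le in Hc. lra.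
- assert (IZR m + 1 <= IZR b). { rewrite <- plus_IZR. apply IZR_le. lia. } lra. Qed.

Lemma scale_le c n e N t : (n + e = N)%nat ->
  (IZR c / 2 ^ n <= t <-> IZR (c * 2 ^ Z.of_nat e) <= t * 2 ^ N).
Proof. intros <-. rewrite mult_IZR, IZR_pow2, pow_add.
pose proof (pow2_pos n) as Pn; pose proof (pow2_pos e) as Pe.
split; intro H.
- apply Rmult_le_compat_r with (r := 2^n * 2^e) in H; [|nra].
  replace (IZR c / 2 ^ n * (2 ^ n * 2 ^ e)) with (IZR c * 2^e) in H by (field; lra). lra.
- apply Rmult_le_reg_r with (r := 2^n * 2^e); [nra|].
  replace (IZR c / 2 ^ n * (2 ^ n * 2 ^ e)) with (IZR c * 2^e) by (field; lra). lra. Qed.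

Lemma scale_lt c n e N t : (n + e = N)%nat ->
  (t < IZR c / 2 ^ n <-> t * 2 ^ N < IZR (c * 2 ^ Z.of_nat e)).
Proof. intros <-. rewrite mult_IZR, IZR_pow2, pow_add.
pose proof (pow2_pos n) as Pn; pose proof (pow2_pos e) as Pe.
split; intro H.
- apply Rmult_lt_compat_r with (r := 2^n * 2^e) in H; [|nra].
  replace (IZR c / 2 ^ n * (2 ^ n * 2 ^ e)) with (IZR c * 2^e) in H by (field; lra). lra.
- apply Rmult_lt_reg_r with (r := 2^n * 2^e); [nra|].
  replace (IZR c / 2 ^ n * (2 ^ n * 2 ^ e)) with (IZR c * 2^e) by (field; lra). lra. Qed.

Lemma dyadb_int n e N j t m : (n + e = N)%nat -> fl m (t * 2 ^ N) ->
  in_dyadb n j t = (((j - 1) * 2 ^ Z.of_nat e <=? m)%Z && (m <? j * 2 ^ Z.of_nat e)%Z)%bool.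
Proof. intros HN Hm. unfold in_dyadb.
destruct (Rle_dec _ _) as [H1|H1]; [destruct (Rlt_dec _ _) as [H2|H2]|].
- apply (scale_le _ _ _ _ _ HN), (fl_le _ _ _ Hm) in H1.
  apply (scale_lt _ _ _ _ _ HN), (fl_lt _ _ _ Hm) in H2.
  apply Z.leb_le in H1; apply Z.ltb_lt in H2. rewrite H1, H2. reflexivity.
- rewrite (scale_lt _ _ _ _ _ HN), (fl_lt _ _ _ Hm) in H2.
  destruct (m <? _)%Z eqn:E; [apply Z.ltb_lt in E; tauto|]. now rewrite Bool.andb_false_r.
- rewrite (scale_le _ _ _ _ _ HN), (fl_le _ _ _ Hm) in H1.
  destruct (_ <=? m)%Z eqn:E; [apply Z.leb_le in E; tauto|]. reflexivity. Qed.

Definition haarZ (k e : nat) (j m : Z) : R :=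
  if (((2 * j - 1 - 1) * 2 ^ Z.of_nat e <=? m)%Z && (m <? (2 * j - 1) * 2 ^ Z.of_nat e)%Z)%bool
  then sqrt (2 ^ (k - 1))
  else if (((2 * j - 1) * 2 ^ Z.of_nat e <=? m)%Z && (m <? (2 * j) * 2 ^ Z.of_nat e)%Z)%bool
  then - sqrt (2 ^ (k - 1)) else 0.

Lemma haar_int k e N j t m : (k + e = N)%nat -> fl m (t * 2 ^ N) ->
  haar k j t = haarZ k e j m.
Proof. intros HN Hm. unfold haar, haarZ.
rewrite (dyadb_int _ _ _ _ _ _ HN Hm), (dyadb_int _ _ _ (2*j) _ _ HN Hm).
replace (2 * j - 1 - 1)%Z with (2*j-1-1)%Z by lia. reflexivity. Qed.

Definition phiZ (e : nat) (i m : Z) : Z :=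
  if (((4 * i - 2 - 1) * 2 ^ Z.of_nat e <=? m)%Z && (m <? (4 * i - 2) * 2 ^ Z.of_nat e)%Z)%bool
  then (m + 2 ^ Z.of_nat e)%Z
  else if (((4 * i - 1 - 1) * 2 ^ Z.of_nat e <=? m)%Z && (m <? (4 * i - 1) * 2 ^ Z.of_nat e)%Z)%bool
  then (m - 2 ^ Z.of_nat e)%Z else m.

Lemma phi_int h e N i t m : (S h + e = N)%nat -> fl m (t * 2 ^ N) ->
  fl (phiZ e i m) (phi_map h i t * 2 ^ N).
Proof. intros HN Hm. unfold phi_map, phiZ.
rewrite (dyadb_int _ _ _ (4*i-2) _ _ HN Hm), (dyadb_int _ _ _ (4*i-1) _ _ HN Hm).
assert (E : 2 ^ N = 2 ^ S h * 2 ^ e) by (subst; apply pow_add).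
pose proof (pow2_pos (S h)).
destruct (_ && _)%bool; [|destruct (_ && _)%bool].
- unfold fl in *. rewrite plus_IZR, IZR_pow2.
  replace ((t + / 2 ^ S h) * 2 ^ N) with (t * 2^N + 2^e) by (rewrite E; field; lra). lra.
- unfold fl in *. rewrite minus_IZR, IZR_pow2.
  replace ((t - / 2 ^ S h) * 2 ^ N) with (t * 2^N - 2^e) by (rewrite E; field; lra). lra.
- exact Hm. Qed.

Lemma divpow c b e : IZR c / 2 ^ b = IZR (c * 2 ^ Z.of_nat e) / 2 ^ (b + e).
Proof. rewrite mult_IZR, IZR_pow2, pow_add. pose proof (pow2_pos b); pose proof (pow2_pos e).
field; lra. Qed.

Lemma incl_to_int a b j l : (forall t, dyad a j t -> dyad b l t) ->
  (b <= a)%nat /\ ((l-1)*2^Z.of_nat(a-b) <= j-1)%Z /\ (j <= l * 2^Z.of_nat(a-b))%Z.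
Proof. intro H. unfold dyad in H.
pose proof (pow2_pos a) as PA; pose proof (pow2_pos b) as PB.
assert (Hj : IZR (j-1) / 2^a < IZR j / 2^a).
{ unfold Rdiv. apply Rmult_lt_compat_r. apply Rinv_0_lt_compat; lra. apply IZR_lt; lia. }
destruct (H (IZR (j-1) / 2^a)) as [L1 L2]; [lra|].
assert (U : IZR j / 2^a <= IZR l / 2^b).
{ destruct (Rle_dec (IZR j / 2^a) (IZR l / 2^b)) as [|n]; auto. exfalso.
  destruct (H (Rmax (IZR (j-1) / 2^a) (IZR l / 2^b))) as [_ X].
  - split; [apply Rmax_l|]. apply Rmax_lub_lt; lra.
  - pose proof (Rmax_r (IZR (j-1) / 2^a) (IZR l / 2^b)). lra. }
assert (Hab : (b <= a)%nat).
{ destruct (Nat.le_gt_cases b a) as [|Hc]; auto. exfalso.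
  assert (2^a < 2^b) by (apply Rlt_pow; [lra|lia]).
  assert (IZR j / 2 ^ a - IZR (j - 1) / 2 ^ a = / 2^a) by (rewrite minus_IZR; field; lra).
  assert (IZR l / 2 ^ b - IZR (l - 1) / 2 ^ b = / 2^b) by (rewrite minus_IZR; field; lra).
  assert (/ 2^b < / 2^a) by (apply Rinv_lt_contravar; nra). lra. }
split; auto.
rewrite (divpow _ b (a-b)) in L1. rewrite (divpow l b (a-b)) in U. replace (b + (a - b))%nat with a in L1, U by lia.
split.
- apply le_IZR. unfold Rdiv in L1. apply Rmult_le_reg_r with (/ 2^a); auto.
  apply Rinv_0_lt_compat; lra.
- apply le_IZR. unfold Rdiv in U. apply Rmult_le_reg_r with (/ 2^a); auto.
  apply Rinv_0_lt_compat; lra. Qed.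

Lemma int_to_incl a b j l : (b <= a)%nat ->
  ((l-1)*2^Z.of_nat(a-b) <= j-1)%Z -> (j <= l * 2^Z.of_nat(a-b))%Z ->
  forall t, dyad a j t -> dyad b l t.
Proof. intros Hab H1 H2 t [T1 T2]. unfold dyad.
pose proof (pow2_pos a) as PA.
rewrite (divpow _ b (a-b)), (divpow l b (a-b)). replace (b + (a - b))%nat with a by lia.
apply IZR_le in H1, H2. unfold Rdiv in *.
assert (0 < / 2^a) by (apply Rinv_0_lt_compat; lra).
split; nra. Qed.

Lemma phiZ_spec e i m : let P := (2^Z.of_nat e)%Z in
 (((4*i-3)*P <= m < (4*i-2)*P)%Z /\ phiZ e i m = (m + P)%Z) \/
 (((4*i-2)*P <= m < (4*i-1)*P)%Z /\ phiZ e i m = (m - P)%Z) \/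
 (~((4*i-3)*P <= m < (4*i-2)*P)%Z /\ ~((4*i-2)*P <= m < (4*i-1)*P)%Z /\ phiZ e i m = m).
Proof. intro P. unfold phiZ. fold P. assert (HP : (0 < P)%Z) by (apply Z.pow_pos_nonneg; lia). clearbody P.
destruct (Z.leb_spec ((4 * i - 2 - 1) * P) m); destruct (Z.ltb_spec m ((4 * i - 2) * P));
destruct (Z.leb_spec ((4 * i - 1 - 1) * P) m); destruct (Z.ltb_spec m ((4 * i - 1) * P));
cbn [andb]; try (left; split; [lia|reflexivity]); try (right; left; split; [lia|reflexivity]);
idtac. all: right; right; split; [lia|split; [lia|reflexivity]]. Qed.

Ltac splitb := repeat (match goal with
  | |- context [ (?a <=? ?b)%Z ] => destruct (Z.leb_spec a b)
  | |- context [ (?a <? ?b)%Z ] => destruct (Z.ltb_spec a b) end;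
  cbn [andb]; try (exfalso; lia)).

Lemma sq2 h' : sqrt (2^(S h')) = sqrt 2 * sqrt (2^h').
Proof. rewrite <- sqrt_mult; [reflexivity|lra|left; apply pow2_pos]. Qed.

Lemma claims123 h' i : (1 <= i)%Z -> forall t,
  (haar (S h') i (phi_map (S h') i t)
     = (haar (S (S h')) (2 * i - 1) t + haar (S (S h')) (2 * i) t) / sqrt 2) /\
  (haar (S (S h')) (2 * i - 1) (phi_map (S h') i t)
     = (sqrt 2 * haar (S h') i t + haar (S (S h')) (2 * i - 1) t - haar (S (S h')) (2 * i) t) / 2) /\
  (haar (S (S h')) (2 * i) (phi_map (S h') i t)
     = (sqrt 2 * haar (S h') i t - haar (S (S h')) (2 * i - 1) t + haar (S (S h')) (2 * i) t) / 2).
Proof. intros Hi t.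
destruct (fl_ex (t * 2^(S (S h')))) as [m Hm].
pose proof (phi_int (S h') 0 (S (S h')) i t m ltac:(lia) Hm) as Hp.
rewrite (haar_int (S h') 1 (S (S h')) i _ _ ltac:(lia) Hp).
rewrite (haar_int (S (S h')) 0 (S (S h')) _ _ _ ltac:(lia) Hp).
rewrite (haar_int (S (S h')) 0 (S (S h')) _ _ _ ltac:(lia) Hp).
rewrite (haar_int (S h') 1 (S (S h')) i _ _ ltac:(lia) Hm).
rewrite (haar_int (S (S h')) 0 (S (S h')) _ _ _ ltac:(lia) Hm).
rewrite (haar_int (S (S h')) 0 (S (S h')) _ _ _ ltac:(lia) Hm).
clear Hp Hm.
pose proof (sq2 h') as Hb. assert (Hs : 0 < sqrt 2) by (apply sqrt_lt_R0; lra).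
unfold haarZ. replace (S (S h') - 1)%nat with (S h') by lia.
replace (S h' - 1)%nat with h' by lia. rewrite Hb.
destruct (phiZ_spec 0 i m) as [[C E]|[[C E]|[C1 [C2 E]]]]; rewrite E;
change (2 ^ Z.of_nat 0)%Z with 1%Z in *; change (2 ^ Z.of_nat 1)%Z with 2%Z in *;
splitb; split; try split; field; lra.
Qed.

Lemma pow_S d : (2 ^ Z.of_nat (S d) = 2 * 2 ^ Z.of_nat d)%Z.
Proof. rewrite Nat2Z.inj_succ, Z.pow_succ_r by lia. reflexivity. Qed.

Lemma claim45 h i k j (s : bool) : (1 <= i)%Z ->
  (forall t, dyad (k - 1) j t -> dyad (S h) (4 * i - (if s then 2 else 1)) t) ->
  forall t, haar k j (phi_map h i t)
     = haar k (if s then j + 2 ^ (Z.of_nat k - Z.of_nat h - 2) else j - 2 ^ (Z.of_nat k - Z.of_nat h - 2))%Z t.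
Proof. intros Hi Hincl t.
apply incl_to_int in Hincl. destruct Hincl as [Hk [H1 H2]].
set (d := (k - 1 - S h)%nat) in *.
replace (Z.of_nat k - Z.of_nat h - 2)%Z with (Z.of_nat d) by (unfold d; lia).
destruct (fl_ex (t * 2^k)) as [m Hm].
pose proof (phi_int h (S d) k i t m ltac:(unfold d; lia) Hm) as Hp.
rewrite (haar_int k 0 k _ _ _ ltac:(lia) Hp).
rewrite (haar_int k 0 k _ _ _ ltac:(lia) Hm).
clear Hp Hm.
assert (HP : (0 < 2 ^ Z.of_nat d)%Z) by (apply Z.pow_pos_nonneg; lia).
destruct (phiZ_spec (S d) i m) as [[C E]|[[C E]|[C1 [C2 E]]]]; rewrite E; clear E;
rewrite ?pow_S in *; change (2 ^ Z.of_nat 0)%Z with 1%Z in *;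
set (P := (2 ^ Z.of_nat d)%Z) in *; clearbody P;
unfold haarZ; destruct s; splitb; try reflexivity; lra.
Qed.

Lemma claim6 h i k j : (1 <= i)%Z -> (1 <= h)%nat -> inD k j ->
     ~ (k = h /\ j = i) ->
     ~ (k = S h /\ j = (2 * i - 1)%Z) ->
     ~ (k = S h /\ j = (2 * i)%Z) ->
     ~ inS1 h i k j -> ~ inS2 h i k j ->
     forall t, haar k j (phi_map h i t) = haar k j t.
Proof. intros Hi Hh HD N0 N1 N2 NS1 NS2 t.
destruct (le_lt_dec k (S h)) as [Hk|Hk].
- destruct (fl_ex (t * 2^(S h))) as [m Hm].
  pose proof (phi_int h 0 (S h) i t m ltac:(lia) Hm) as Hp.
  set (f := (S h - k)%nat).
  rewrite (haar_int k f (S h) _ _ _ ltac:(unfold f; lia) Hp).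
  rewrite (haar_int k f (S h) _ _ _ ltac:(unfold f; lia) Hm).
  clear Hp Hm.
  destruct (phiZ_spec 0 i m) as [[C E]|[[C E]|[C1 [C2 E]]]]; rewrite E; clear E;
  change (2 ^ Z.of_nat 0)%Z with 1%Z in *; try reflexivity;
  unfold haarZ; (destruct f as [|[|g]] eqn:Ef;
   [ assert (j <> 2*i-1)%Z by (intro; apply N1; split; [lia|auto]);
     assert (j <> 2*i)%Z by (intro; apply N2; split; [lia|auto]);
     change (2 ^ Z.of_nat 0)%Z with 1%Z in *
   | assert (j <> i)%Z by (intro; apply N0; split; [lia|auto]);
     change (2 ^ Z.of_nat 1)%Z with 2%Z in *
   | rewrite !pow_S in *;
     assert (HP : (0 < 2 ^ Z.of_nat g)%Z) by (apply Z.pow_pos_nonneg; lia);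
     set (P := (2 ^ Z.of_nat g)%Z) in *; clearbody P ];
   splitb; try reflexivity; lra).
- destruct HD as [Hk1 Hj].
  set (d := (k - 1 - S h)%nat).
  assert (A1 : ~ ((4*i-2-1) * 2 ^ Z.of_nat d <= j - 1 /\ j <= (4*i-2) * 2 ^ Z.of_nat d)%Z).
  { intros [X Y]. apply NS1. split; [split; auto|]. apply int_to_incl; auto; lia. }
  assert (A2 : ~ ((4*i-1-1) * 2 ^ Z.of_nat d <= j - 1 /\ j <= (4*i-1) * 2 ^ Z.of_nat d)%Z).
  { intros [X Y]. apply NS2. split; [split; auto|]. apply int_to_incl; auto; lia. }
  destruct (fl_ex (t * 2^k)) as [m Hm].
  pose proof (phi_int h (S d) k i t m ltac:(unfold d; lia) Hm) as Hp.
  rewrite (haar_int k 0 k _ _ _ ltac:(lia) Hp).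
  rewrite (haar_int k 0 k _ _ _ ltac:(lia) Hm).
  clear Hp Hm.
  assert (HP : (0 < 2 ^ Z.of_nat d)%Z) by (apply Z.pow_pos_nonneg; lia).
  destruct (phiZ_spec (S d) i m) as [[C E]|[[C E]|[C1 [C2 E]]]]; rewrite E; clear E;
  try reflexivity;
  rewrite ?pow_S in *; change (2 ^ Z.of_nat 0)%Z with 1%Z in *;
  set (P := (2 ^ Z.of_nat d)%Z) in *; clearbody P;
  unfold haarZ; splitb; try reflexivity; lra.
Qed.

Theorem lemma3p3 (h : nat) (i : Z) :
  inD h i ->
  (forall t, 0 <= t < 1 ->
     haar h i (phi_map h i t)
     = (haar (S h) (2 * i - 1) t + haar (S h) (2 * i) t) / sqrt 2) /\
  (forall t, 0 <= t < 1 ->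
     haar (S h) (2 * i - 1) (phi_map h i t)
     = (sqrt 2 * haar h i t + haar (S h) (2 * i - 1) t - haar (S h) (2 * i) t) / 2) /\
  (forall t, 0 <= t < 1 ->
     haar (S h) (2 * i) (phi_map h i t)
     = (sqrt 2 * haar h i t - haar (S h) (2 * i - 1) t + haar (S h) (2 * i) t) / 2) /\
  (forall k j, inS1 h i k j -> forall t, 0 <= t < 1 ->
     haar k j (phi_map h i t)
     = haar k (j + 2 ^ (Z.of_nat k - Z.of_nat h - 2))%Z t) /\
  (forall k j, inS2 h i k j -> forall t, 0 <= t < 1 ->
     haar k j (phi_map h i t)
     = haar k (j - 2 ^ (Z.of_nat k - Z.of_nat h - 2))%Z t) /\
  (forall k j, inD k j ->
     ~ (k = h /\ j = i) ->
     ~ (k = S h /\ j = (2 * i - 1)%Z) ->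
     ~ (k = S h /\ j = (2 * i)%Z) ->
     ~ inS1 h i k j -> ~ inS2 h i k j ->
     forall t, 0 <= t < 1 -> haar k j (phi_map h i t) = haar k j t).
Proof.
  intros [Hh Hi].
  assert (Hi1 : (1 <= i)%Z) by lia.
  split; [|split; [|split; [|split; [|split]]]].
  - intros t _. destruct h as [|h']; [lia|]. apply (claims123 h' i Hi1 t).
  - intros t _. destruct h as [|h']; [lia|]. apply (claims123 h' i Hi1 t).
  - intros t _. destruct h as [|h']; [lia|]. apply (claims123 h' i Hi1 t).
  - intros k j [_ Hinc] t _. exact (claim45 h i k j true Hi1 Hinc t).
  - intros k j [_ Hinc] t _. exact (claim45 h i k j false Hi1 Hinc t).
  - intros k j HD N0 N1 N2 NS1 NS2 t _. eapply claim6; eauto.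
Qed.
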